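(* As formal power series in $t$, $$ \sum_{n \ge 0} f^+_n(x) \frac{t^n}{n!} = \frac{e^{xt} - x e^t}{e^{2xt} - x e^{2t}} \quad\text{and}\quad \sum_{n \ge 0} f^-_n(x) \frac{t^n}{n!} = \frac{x\,(e^t - e^{xt})}{e^{2xt} - x e^{2t}}. $$
   Context: A signed permutation of $[n]$ is a set $S = \{a_1, \dots, a_n\}$ with $a_i \in \{i, -i\}$, together with a bijection $w : S \to S$. - $a \in S$ is a $B$-excedance if $w(a) > a$, or if $a < 0$ and $w(a) = a$. - $w$ is a derangement if no $a \in S$ with $a > 0$ has $w(a) = a$. - $d^B_n(x) = \sum_{w \text{ derangement}} x^{\mathrm{exc}_B(w)}$, where $\mathrm{exc}_B(w)$ is the number of $B$-excedances, and $d^B_0 = 1$. - $f^+_n, f^-_n$ are the unique real polynomials with $d^B_n = f^+_n + f^-_n$, $f^+_n(x) = x^n f^+_n(1/x)$ and $f^-_n(x) = x^{n+1} f^-_n(1/x)$. *)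

(* Defs.v *)
From HB Require Import structures.
From mathcomp Require Import all_boot all_order all_algebra all_fingroup.
Set Implicit Arguments. Unset Strict Implicit. Unset Printing Implicit Defensive.
Import Order.TTheory GRing.Theory Num.Theory.
Local Open Scope ring_scope.

(* A signed permutation of [n] is encoded as a pair (eps, s):
   eps i = true  iff  a_(i+1) = -(i+1)  (index i : 'I_n stands for i+1),
   s : {perm 'I_n} with  w(a_(i+1)) = a_(s(i)+1). *)
Definition signed_perm (n : nat) : finType :=
  ({ffun 'I_n -> bool} * {perm 'I_n})%type.

Definition sval (n : nat) (eps : {ffun 'I_n -> bool}) (i : 'I_n) : int :=
  if eps i then - (i.+1%:Z) else i.+1%:Z.

Definition is_excB (n : nat) (p : signed_perm n) (i : 'I_n) : bool :=
  (sval p.1 i < sval p.1 (p.2 i))%R || (p.1 i && (p.2 i == i)).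

Definition excB (n : nat) (p : signed_perm n) : nat :=
  #|[set i : 'I_n | is_excB p i]|.

Definition derangementB (n : nat) (p : signed_perm n) : bool :=
  [forall i : 'I_n, ~~ ((~~ p.1 i) && (p.2 i == i))].

Definition dB (R : nzRingType) (n : nat) : {poly R} :=
  \sum_(p : signed_perm n | derangementB p) 'X^(excB p).

(* f+_n and f-_n as characterised in the paper: d = f+ + f-,
   f+(x) = x^n f+(1/x), f-(x) = x^(n+1) f-(1/x) (for all nonzero x). *)
Definition fpm_spec (R : realFieldType) (n : nat) (fp fm : {poly R}) : Prop :=
  [/\ dB R n = fp + fm,
      forall x : R, x != 0 -> fp.[x] = x ^+ n * fp.[x^-1]
    & forall x : R, x != 0 -> fm.[x] = x ^+ n.+1 * fm.[x^-1]].

(* t^m/m!-coefficient of the denominator e^(2xt) - x e^(2t) *)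
Definition egf_den (R : nzRingType) (m : nat) : {poly R} :=
  (2 ^ m)%:R *: ('X^m - 'X).

(* Coefficient of t^n/n! in the exponential (binomial) product
   (sum_k a_k t^k/k!) * (e^(2xt) - x e^(2t)). *)
Definition egf_prod_den (R : nzRingType) (a : nat -> {poly R}) (n : nat) : {poly R} :=
  \sum_(k < n.+1) 'C(n, k)%:R *: (a k * egf_den R (n - k)).

(* Main.v *)
Require Import Defs.
From HB Require Import structures.
From mathcomp Require Import all_boot all_order all_algebra all_fingroup.
From mathcomp Require Import ring lra zify.
Import Order.TTheory GRing.Theory Num.Theory.
Local Open Scope ring_scope.

Section Conv.
Variable R : realFieldType.
Implicit Types a b : nat -> {poly R}.

Definition conv a b n : {poly R} := \sum_(k < n.+1) 'C(n, k)%:R *: (a k * b (n - k)%N).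
Definition sh a n := a n.+1.
Definition tm a n : {poly R} := n%:R * a n.-1.

Lemma eq_conv a a' b n : (forall k, a k = a' k) -> conv a b n = conv a' b n.
Proof. by move=> ha; apply: eq_bigr => k _; rewrite ha. Qed.

Lemma convDl a1 a2 b n : conv (fun k => a1 k + a2 k) b n = conv a1 b n + conv a2 b n.
Proof. by rewrite /conv -big_split /=; apply: eq_bigr => k _; rewrite mulrDl scalerDr. Qed.

Lemma convMl (p : {poly R}) a b n : conv (fun k => p * a k) b n = p * conv a b n.
Proof. by rewrite /conv mulr_sumr; apply: eq_bigr => k _; rewrite -mulrA scalerAr. Qed.

Lemma convC a b n : conv a b n = conv b a n.
Proof.
rewrite /conv (reindex_inj rev_ord_inj) /=; apply: eq_bigr => k _.
have hk : (k <= n)%N by rewrite -ltnS.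
by rewrite subSS subKn // bin_sub // mulrC.
Qed.

Lemma convDr a b1 b2 n : conv a (fun k => b1 k + b2 k) n = conv a b1 n + conv a b2 n.
Proof. by rewrite convC convDl !(convC _ a). Qed.

Lemma convMr (p : {poly R}) a b n : conv a (fun k => p * b k) n = p * conv a b n.
Proof. by rewrite convC convMl convC. Qed.

Lemma conv_leib a b n : conv a b n.+1 = conv (sh a) b n + conv a (sh b) n.
Proof.
rewrite /conv big_ord_recl /= bin0 subn0.
under eq_bigr do rewrite binS natrD scalerDl.
rewrite big_split /= addrA addrC; congr (_ + _).
rewrite big_ord_recr /= bin_small // scale0r addr0.
rewrite [in RHS]big_ord_recl /= bin0 subn0; congr (_ + _).
apply: eq_bigr => i _; rewrite /sh /bump /= add1n subSS subnSK //.
Qed.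

Lemma conv_tm a b n : conv (tm a) b n = tm (conv a b) n.
Proof.
case: n => [|m]; first by rewrite /conv big_ord1 /tm !mul0r scaler0.
rewrite /conv big_ord_recl /= {1}/tm mul0r mul0r scaler0 add0r /tm /= mulr_sumr.
apply: eq_bigr => i _; rewrite /bump /= add1n subSS.
rewrite !scaler_nat -mulrA !mulr_natl -!mulrnA; congr (_ *+ _).
by rewrite -mul_bin_diag mulnC.
Qed.

Lemma conv_tmr a b n : conv a (tm b) n = tm (conv a b) n.
Proof. by rewrite convC conv_tm /tm convC. Qed.

Lemma conv_deriv a b n :
  (conv a b n)^`() = conv (fun k => (a k)^`()) b n + conv a (fun k => (b k)^`()) n.
Proof.
rewrite /conv raddf_sum -big_split /=; apply: eq_bigr => k _.
by rewrite derivZ derivM scalerDr.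
Qed.

Lemma tm_sh a n : tm (sh a) n = n%:R * a n.
Proof. by case: n => [|n]; rewrite /tm /sh ?mul0r. Qed.

Definition Frec (n : nat) (A B : {poly R}) : {poly R} :=
  ('X *+ 2) * (n%:R * A) + ('X *+ 3) * A + ('X *+ 2 * (1 - 'X)) * A^`()
  - ('X *+ 2) * (n%:R * B).

Lemma conv_rec d c :
  (forall n, d n.+1 = ('X *+ 2) * tm (sh d) n + 'X * d n
       + ('X *+ 2 * (1 - 'X)) * (d n)^`() + ('X *+ 2) * tm d n) ->
  (forall n, c n.+1 = ('X *+ 2) * tm (sh c) n + ('X *+ 2 * (1 - 'X)) * (c n)^`()
       + ('X *+ 2) * c n + (- 'X *+ 4) * tm c n) ->
  forall n, conv d c n.+1 = Frec n (conv d c n) (conv d c n.-1).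
Proof.
move=> hd hc n.
have E1 : conv (sh d) c n = ('X *+ 2) * tm (conv (sh d) c) n + 'X * conv d c n
   + ('X *+ 2 * (1 - 'X)) * conv (fun k => (d k)^`()) c n + ('X *+ 2) * tm (conv d c) n.
  rewrite (eq_conv (sh d) _ c n hd) !convDl !convMl conv_tm.
  by rewrite (conv_tm d).
have E2 : conv d (sh c) n = ('X *+ 2) * tm (conv d (sh c)) n
   + ('X *+ 2 * (1 - 'X)) * conv d (fun k => (c k)^`()) n
   + ('X *+ 2) * conv d c n + (- 'X *+ 4) * tm (conv d c) n.
  rewrite convC (eq_conv (sh c) _ d n hc) !convDl !convMl !(convC _ d) conv_tmr.
  by rewrite (conv_tmr d).
have E3 : tm (conv d c) n = n%:R * conv d c n.-1 by [].
have E4 : n%:R * conv d c n = tm (conv (sh d) c) n + tm (conv d (sh c)) n.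
  case: n {E1 E2 E3} => [|n]; first by rewrite /tm !mul0r addr0.
  by rewrite /tm /= -mulrDr -conv_leib.
rewrite /Frec conv_leib E1 E2 E4 conv_deriv -E3.
ring.
Qed.

Lemma rec_uniq u v : u 0%N = v 0%N ->
  (forall n, u n.+1 = Frec n (u n) (u n.-1)) ->
  (forall n, v n.+1 = Frec n (v n) (v n.-1)) -> forall n, u n = v n.
Proof.
move=> h0 hu hv.
suff H : forall n, u n = v n /\ u n.+1 = v n.+1 by move=> n; case: (H n).
elim=> [|n [IH1 IH2]]; first by rewrite hu hv /= h0.
by split=> //; rewrite hu hv /= IH1 IH2.
Qed.

Definition psi (n : nat) : {poly R} := 'X^n - 'X^(n.+1).

Lemma psi_rec n : psi n.+1 = Frec n (psi n) (psi n.-1).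
Proof.
rewrite /Frec /psi derivB !derivXn /=.
case: n => [|n]; rewrite /=.
  by rewrite expr0 expr1 !mul0r !mulr0n; ring.
rewrite !exprS !mulrS !mulr0n; ring.
Qed.

Lemma den_rec n : egf_den R n.+1 = ('X *+ 2) * tm (sh (egf_den R)) n
   + ('X *+ 2 * (1 - 'X)) * (egf_den R n)^`()
   + ('X *+ 2) * egf_den R n + (- 'X *+ 4) * tm (egf_den R) n.
Proof.
rewrite tm_sh /tm /egf_den !derivZ derivB derivXn derivX.
case: n => [|n] /=.
  by rewrite -!mul_polyC !polyC_natr expr0 expr1; ring.
rewrite -!mul_polyC !polyC_natr !expnS !natrM !exprS.
set c := (2 ^ n)%:R; set Y := 'X^n; ring.
Qed.

End Conv.
Arguments conv {R}. Arguments sh {R}. Arguments tm {R}. Arguments psi {R}. Arguments Frec {R}.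

Section Eval.
Variable R : realFieldType.

Lemma root_inf (P : {poly R}) :
  (forall z : R, z != 0 -> z != 1 -> P.[z] = 0) -> P = 0.
Proof.
move=> H; apply/eqP; apply/negPn/negP => hP.
suff : (size P < size P)%N by rewrite ltnn.
have := @max_poly_roots _ P [seq (i.+2)%:R | i <- iota 0 (size P)] hP.
rewrite size_map size_iota; apply.
  apply/allP => z /mapP [i _ ->]; rewrite /root; apply/eqP/H.
    by rewrite pnatr_eq0.
  by rewrite pnatr_eq1.
by rewrite map_inj_uniq ?iota_uniq // => i j /eqP; rewrite eqr_nat => /eqP [] ->.
Qed.

Lemma antipal (a : nat -> {poly R}) (s n : nat) (x : R) : x != 0 ->
  (forall k, (a k).[x^-1] = x^-1 ^+ (k + s) * (a k).[x]) ->
  x ^+ (n.+1 + s) * (egf_prod_den a n).[x^-1] = - (egf_prod_den a n).[x].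
Proof.
move=> x0 H; rewrite /egf_prod_den !horner_sum mulr_sumr -sumrN.
apply: eq_bigr => k _.
rewrite !hornerZ !hornerM H /egf_den !hornerZ !hornerD !hornerN !hornerXn !hornerX.
have hk : (k <= n)%N by rewrite -ltnS.
have -> : (n.+1 + s = (k + s) + (n - k) + 1)%N by lia.
move: (n - k)%N => m.
rewrite !exprD expr1 !exprVn.
have u0 : x ^+ (k + s) != 0 by rewrite expf_neq0.
have v0 : x ^+ m != 0 by rewrite expf_neq0.
move: (x ^+ (k + s)) (x ^+ m) u0 v0 => u v u0 v0.
by field; rewrite x0 v0 !expf_neq0.
Qed.

Lemma P_zero (P M : {poly R}) n : P + M = 0 ->
  (forall x, x != 0 -> x ^+ n.+1 * P.[x^-1] = - P.[x]) ->
  (forall x, x != 0 -> x ^+ n.+2 * M.[x^-1] = - M.[x]) -> P = 0.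
Proof.
move=> hPM h1 h2; apply: root_inf => z z0 z1.
have hM : M = - P by apply/eqP; rewrite -addr_eq0 addrC hPM.
have x0 : z^-1 != 0 by rewrite invr_eq0.
have x1 : z^-1 != 1 by rewrite invr_eq1.
have := h1 _ x0; have := h2 _ x0; rewrite hM !hornerN invrK.
move: (z^-1) x0 x1 => x x0 x1.
rewrite exprS => e2 e1.
have : x ^+ n.+1 * P.[z] * (x - 1) = 0.
  rewrite -mulrA mulrN e1 !opprK in e2.
  by rewrite e1 mulNr mulrBr mulr1 mulrC e2 subrr oppr0.
move/eqP; rewrite !mulf_eq0 subr_eq0 expf_eq0 (negPf x0) (negPf x1) andbF orbF.
by move/eqP.
Qed.

End Eval.

Set Implicit Arguments. Unset Strict Implicit.
Section Split.
Variable R : realFieldType.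

Definition qrev n (p : {poly R}) : {poly R} := \poly_(i < n.+2) p`_(n.+1 - i).
Definition fplus n (p : {poly R}) : {poly R} := (qrev n p - p) %/ ('X - 1).

Lemma qrev_eval n (p : {poly R}) (x : R) : (size p <= n.+2)%N -> x != 0 ->
  (qrev n p).[x] = x ^+ n.+1 * p.[x^-1].
Proof.
move=> hs x0; rewrite horner_poly (horner_coef_wide _ hs) mulr_sumr.
rewrite (reindex_inj rev_ord_inj) /=; apply: eq_bigr => i _.
rewrite subSS.
have hi : (i <= n.+1)%N by rewrite -ltnS.
rewrite subKn // exprVn.
have -> : x ^+ n.+1 = x ^+ (n.+1 - i) * x ^+ i by rewrite -exprD subnK.
have u0 : x ^+ i != 0 by rewrite expf_neq0.
move: (x ^+ i) u0 => u u0.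
by field.
Qed.

Lemma qrev_dvd n (p : {poly R}) : (size p <= n.+2)%N -> ('X - 1) %| (qrev n p - p).
Proof.
move=> hs; rewrite -polyC1 dvdp_XsubCl /root hornerD hornerN.
by rewrite qrev_eval ?oner_neq0 // expr1n mul1r invr1 subrr.
Qed.

Lemma fplus_eq n (p : {poly R}) (x : R) : (size p <= n.+2)%N ->
  (fplus n p).[x] * (x - 1) = (qrev n p).[x] - p.[x].
Proof.
move=> hs; have := divpK (qrev_dvd hs); rewrite -/(fplus n p) => e.
by rewrite -hornerN -hornerD -e !hornerE.
Qed.

Lemma fplus_pal n (p : {poly R}) (x : R) : (size p <= n.+2)%N -> x != 0 ->
  (fplus n p).[x] = x ^+ n * (fplus n p).[x^-1].
Proof.
move=> hs x0; have [->|x1] := eqVneq x 1; first by rewrite expr1n mul1r invr1.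
have y0 : x^-1 != 0 by rewrite invr_eq0.
have y1 : x^-1 - 1 != 0 by rewrite subr_eq0 invr_eq1.
have x1' : x - 1 != 0 by rewrite subr_eq0.
have H1 := fplus_eq x hs; have H2 := fplus_eq x^-1 hs.
rewrite !qrev_eval // invrK in H1 H2.
have Hy : (fplus n p).[x^-1] = (x^-1 ^+ n.+1 * p.[x] - p.[x^-1]) / (x^-1 - 1).
  by rewrite -H2 mulfK.
apply: (mulIf x1'); rewrite H1 Hy exprVn !exprS.
have u0 : x ^+ n != 0 by rewrite expf_neq0.
move: (x ^+ n) u0 (p.[x]) (p.[x^-1]) => u u0 a b.
have x2 : 1 + -1 * x != 0 by rewrite mulN1r subr_eq0 eq_sym.
by field; rewrite x0 u0 x2.
Qed.

Lemma fminus_pal n (p : {poly R}) (x : R) : (size p <= n.+2)%N -> x != 0 ->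
  (p - fplus n p).[x] = x ^+ n.+1 * (p - fplus n p).[x^-1].
Proof.
move=> hs x0; have H1 := fplus_eq x hs; rewrite qrev_eval // in H1.
rewrite !hornerD !hornerN mulrBr.
have y0 : x^-1 != 0 by rewrite invr_eq0.
rewrite (fplus_pal hs y0) invrK.
have e : x ^+ n.+1 * p.[x^-1] = (fplus n p).[x] * (x - 1) + p.[x] by rewrite H1 subrK.
rewrite e exprVn exprS.
have u0 : x ^+ n != 0 by rewrite expf_neq0.
move: (x ^+ n) u0 ((fplus n p).[x]) (p.[x]) => u u0 a b.
by field; rewrite ?x0 ?u0.
Qed.

End Split.
Notation sv := Defs.sval.
Set Implicit Arguments. Unset Strict Implicit.

Lemma sval_lift n (i : 'I_n.+1) (e : {ffun 'I_n -> bool}) (e' : {ffun 'I_n.+1 -> bool}) :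
  (forall k, e' (lift i k) = e k) -> forall a b,
  (sv e' (lift i a) < sv e' (lift i b))%R = (sv e a < sv e b)%R.
Proof.
move=> he a b; rewrite /sv !he /=.
have h1 : (bump i a < bump i b)%N = (a < b)%N by rewrite !ltnNge leq_bump2.
have h2 : (bump i b < bump i a)%N = (b < a)%N by rewrite !ltnNge leq_bump2.
case: (e a); case: (e b) => /=; rewrite ?ltrN2 ?ltz_nat ?ltnS ?h1 ?h2 //; apply/idP; lia.
Qed.

Lemma excB_sum m (p : signed_perm m) : excB p = (\sum_(k < m) (is_excB p k : nat))%N.
Proof.
rewrite /excB -sum1_card big_mkcond /=; apply: eq_bigr => k _.
by rewrite inE; case: (is_excB p k).
Qed.

Lemma forall_split m (j : 'I_m.+1) (P : pred 'I_m.+1) :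
  [forall k, P k] = P j && [forall k : 'I_m, P (lift j k)].
Proof.
apply/forallP/andP => [H|[Hj /forallP H] k]; first by split; [|apply/forallP].
by case: (unliftP j k) => [k' ->|->].
Qed.

Lemma sum_split m (j : 'I_m.+1) (F : 'I_m.+1 -> nat) :
  (\sum_(k < m.+1) F k = F j + \sum_(k < m) F (lift j k))%N.
Proof. exact: (@bigD1_ord _ _ _ m.+1 j xpredT). Qed.

Lemma sum_upd m (i : 'I_m) (F G : 'I_m -> nat) : (forall k, k != i -> F k = G k) ->
  (\sum_(k < m) F k + G i = \sum_(k < m) G k + F i)%N.
Proof.
move=> h; rewrite (bigD1 i) //= [in RHS](bigD1 i) //=.
rewrite (eq_bigr G) => [|k /h //]; lia.
Qed.

Definition posfix m (p : signed_perm m) (k : 'I_m) := ~~ p.1 k && (p.2 k == k).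

Lemma derE m (p : signed_perm m) : derangementB p = [forall k, ~~ posfix p k].
Proof. by []. Qed.

Section Ins.
Variable n : nat.
Local Notation N := (@ord_max n).


Definition ext (e : {ffun 'I_n -> bool}) (b : bool) : {ffun 'I_n.+1 -> bool} :=
  [ffun k => if unlift N k is Some k' then e k' else b].

Lemma ext_lift e b k : ext e b (lift N k) = e k.
Proof. by rewrite ffunE liftK. Qed.

Lemma ext_max e b : ext e b N = b.
Proof. by rewrite ffunE unlift_none. Qed.

Lemma sv_ext_lift e b k : sv (ext e b) (lift N k) = sv e k.
Proof. by rewrite /Defs.sval ext_lift lift_max. Qed.

Lemma sv_ext_max e b : sv (ext e b) N = if b then - (n.+1)%:Z else (n.+1)%:Z.
Proof. by rewrite /Defs.sval ext_max. Qed.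

Lemma sv_bound (e : {ffun 'I_n -> bool}) (k : 'I_n) :
  (- (n.+1)%:Z < sv e k) && (sv e k < (n.+1)%:Z).
Proof. have := ltn_ord k; rewrite /Defs.sval; case: (e k) => h; apply/andP; split; lia. Qed.

Definition ins (q : signed_perm n) (b : bool) (c : 'I_n.+1) : signed_perm n.+1 :=
  (ext q.1 b, (tperm c N * lift_perm N N q.2)%g).

Lemma ins2 q b c x : (ins q b c).2 x = lift_perm N N q.2 (tperm c N x).
Proof. by rewrite /= permM. Qed.

Lemma lp_max (s : {perm 'I_n}) c : (lift_perm N N s c == N) = (c == N).
Proof.
case: (unliftP N c) => [j ->|->]; last by rewrite lift_perm_id !eqxx.
by rewrite lift_perm_lift !(eq_sym _ N) !(negPf (neq_lift _ _)).
Qed.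

Lemma exc_ins_max q b c : is_excB (ins q b c) N = b.
Proof.
rewrite /is_excB ins2 tpermR /= ext_max.
case: (unliftP N c) => [j ->|->]; last by rewrite lift_perm_id ltxx eqxx andbT.
rewrite lift_perm_lift sv_ext_lift sv_ext_max (eq_sym _ N) (negPf (neq_lift _ _)) andbF orbF.
by have /andP[h1 h2] := sv_bound q.1 (q.2 j); case: b => //; apply/negbTE; rewrite -leNgt ltW.
Qed.

Lemma exc_ins_lift q b c k :
  is_excB (ins q b c) (lift N k) = if c == lift N k then ~~ b else is_excB q k.
Proof.
rewrite /is_excB ins2 /= sv_ext_lift.
have [->|ne] := eqVneq c (lift N k).
  rewrite tpermL lift_perm_id sv_ext_max (negPf (neq_lift _ _)) andbF orbF.
  by have /andP[h1 h2] := sv_bound q.1 k; case: b => /=; [apply/negbTE; rewrite -leNgt ltW|].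
have tk : tperm c N (lift N k) = lift N k by rewrite tpermD ?neq_lift.
by rewrite tk lift_perm_lift sv_ext_lift ext_lift (inj_eq lift_inj).
Qed.

Lemma posfix_ins_max q b c : posfix (ins q b c) N = ~~ b && (c == N).
Proof. by rewrite /posfix ins2 tpermR lp_max /= ext_max. Qed.

Lemma posfix_ins_lift q b c k :
  posfix (ins q b c) (lift N k) = if c == lift N k then false else posfix q k.
Proof.
rewrite /posfix ins2 /= ext_lift.
have [->|ne] := eqVneq c (lift N k).
  by rewrite tpermL lift_perm_id (negPf (neq_lift _ _)) andbF.
have tk : tperm c N (lift N k) = lift N k by rewrite tpermD ?neq_lift.
by rewrite tk lift_perm_lift (inj_eq lift_inj).
Qed.

Lemma ins_c q b c : (ins q b c).2 c = N.
Proof. by rewrite ins2 tpermL lift_perm_id. Qed.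

Definition ins3 (t : signed_perm n * bool * 'I_n.+1) := ins t.1.1 t.1.2 t.2.

Lemma ins3_inj : injective ins3.
Proof.
move=> [[[e1 s1] b1] c1] [[[e2 s2] b2] c2]; rewrite /ins3 /= => E.
have E1 : ext e1 b1 = ext e2 b2 by have := congr1 fst E.
have E2 : (tperm c1 N * lift_perm N N s1 = tperm c2 N * lift_perm N N s2)%g
  by have := congr1 snd E.
have hb : b1 = b2 by have := congr1 (fun f : {ffun 'I_n.+1 -> bool} => f N) E1; rewrite /= !ext_max.
have hc : c1 = c2.
  have h1 := ins_c (e1, s1) b1 c1; rewrite E in h1.
  have h2 := ins_c (e2, s2) b2 c2.
  apply: (perm_inj (s := (ins (e2, s2) b2 c2).2)); by rewrite h1 h2.
subst b2 c2.
have he : e1 = e2 by apply/ffunP => k; have := congr1 (fun f : {ffun 'I_n.+1 -> bool} => f (lift N k)) E1; rewrite /= !ext_lift.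
have hs : s1 = s2.
  move/mulgI: E2 => E2; apply/permP => k.
  by apply: (@lift_inj _ N); rewrite -(lift_perm_lift N N s1) -(lift_perm_lift N N s2) E2.
by rewrite he hs.
Qed.

Lemma card_sp m : #|signed_perm m| = (2 ^ m * m`!)%N.
Proof. by rewrite /signed_perm card_prod card_ffun card_bool card_ord card_Sn. Qed.

Lemma ins3_bij : bijective ins3.
Proof.
apply: inj_card_bij; first exact: ins3_inj.
rewrite !card_prod !card_ffun !card_bool !card_ord !card_Sn expnS factS.
nia.
Qed.

Lemma excB_ins_max q b : excB (ins q b N) = (b + excB q)%N.
Proof.
rewrite !excB_sum (sum_split N) exc_ins_max; congr (_ + _)%N.
by apply: eq_bigr => k _; rewrite exc_ins_lift (negPf (neq_lift _ _)).
Qed.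

Lemma excB_ins_lift q b i : (excB (ins q b (lift N i)) + is_excB q i = (excB q).+1)%N.
Proof.
rewrite !excB_sum (sum_split N) exc_ins_max.
under eq_bigr do rewrite exc_ins_lift (inj_eq lift_inj).
rewrite -addnA (@sum_upd _ i (fun k => (if i == k then ~~ b else is_excB q k) : nat)
   (fun k => is_excB q k : nat)); last by move=> k; rewrite eq_sym => /negPf ->.
by rewrite eqxx; case: b => /=; lia.
Qed.

Lemma der_ins_max q b : derangementB (ins q b N) = b && derangementB q.
Proof.
rewrite !derE (forall_split N) posfix_ins_max eqxx andbT negbK; congr (_ && _).
by apply: eq_forallb => k; rewrite posfix_ins_lift (negPf (neq_lift _ _)).
Qed.

Lemma der_ins_lift q b i :
  derangementB (ins q b (lift N i)) = [forall k, (k != i) ==> ~~ posfix q k].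
Proof.
rewrite !derE (forall_split N) posfix_ins_max eq_sym (negPf (neq_lift _ _)) andbF /=.
apply: eq_forallb => k; rewrite posfix_ins_lift (inj_eq lift_inj).
by rewrite eq_sym; case: (k == i).
Qed.

End Ins.

Lemma exc_posfix m (q : signed_perm m) i : posfix q i -> is_excB q i = false.
Proof. by case/andP => h1 /eqP h2; rewrite /is_excB h2 ltxx (negPf h1). Qed.

Definition onlyb m (q : signed_perm m) (i : 'I_m) :=
  posfix q i && [forall k, (k != i) ==> ~~ posfix q k].

Section Fins.
Variables (m : nat) (i : 'I_m.+1).

Definition fins (r : signed_perm m) : signed_perm m.+1 :=
  ([ffun k => if unlift i k is Some k' then r.1 k' else false], lift_perm i i r.2).

Definition only (q : signed_perm m.+1) := onlyb q i.

Lemma fins1_lift r k : (fins r).1 (lift i k) = r.1 k.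
Proof. by rewrite ffunE liftK. Qed.

Lemma fins1_i r : (fins r).1 i = false.
Proof. by rewrite ffunE unlift_none. Qed.

Lemma only_fins r : only (fins r) = derangementB r.
Proof.
rewrite /only /onlyb derE /posfix /= fins1_i lift_perm_id eqxx /=.
rewrite (forall_split i) eqxx /=; apply: eq_forallb => k.
by rewrite eq_sym neq_lift /= -/(fins r) fins1_lift lift_perm_lift (inj_eq lift_inj).
Qed.

Lemma excB_fins r : excB (fins r) = excB r.
Proof.
rewrite !excB_sum (sum_split i) /is_excB /= fins1_i lift_perm_id ltxx /= add0n.
apply: eq_bigr => k _; rewrite lift_perm_lift fins1_lift (inj_eq lift_inj).
congr (nat_of_bool (_ || _)).
by apply: sval_lift => k'; rewrite fins1_lift.
Qed.

Let ulsf j (s : {perm 'I_m.+1}) k := odflt k (unlift (s j) (s (lift j k))).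

Let ulsfK j (s : {perm 'I_m.+1}) k : lift (s j) (ulsf j s k) = s (lift j k).
Proof.
rewrite /ulsf; have:= neq_lift j k.
by rewrite -(can_eq (permK s)) => /unlift_some[] ? ? ->.
Qed.

Let inj_ulsf s : injective (ulsf i s).
Proof.
apply: (can_inj (g := ulsf (s i) s^-1%g)) => k'.
by rewrite {1}/ulsf ulsfK !permK liftK.
Qed.

Definition unfins (q : signed_perm m.+1) : signed_perm m :=
  ([ffun k => q.1 (lift i k)], perm (@inj_ulsf q.2)).

Lemma fins_bij : {on [pred q | only q], bijective fins}.
Proof.
exists unfins => [r _ | q].
  case: r => e s; rewrite /unfins /fins /=; f_equal.
    by apply/ffunP => k; rewrite !ffunE liftK.
  apply/permP => k; rewrite permE /ulsf /= lift_perm_lift lift_perm_id liftK //.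
rewrite inE /only /onlyb => /andP[/andP[h1 /eqP h2] _].
rewrite /fins /unfins /=; case: q h1 h2 => e s /= h1 h2; f_equal.
  apply/ffunP => k; rewrite ffunE; case: (unliftP i k) => [k' ->|->].
    by rewrite ffunE.
  by apply/esym/negbTE.
apply/permP=> k; case: (unliftP i k) => [k'|] ->; rewrite ?lift_perm_id //.
by rewrite lift_perm_lift permE; have := ulsfK i s k'; rewrite h2.
Qed.

End Fins.

Section Poly.
Variable R : realFieldType.

Definition w m (p : signed_perm m) : {poly R} :=
  if derangementB p then 'X^(excB p) else 0.

Lemma dBw m : dB R m = \sum_(p : signed_perm m) w p.
Proof. by rewrite /dB big_mkcond. Qed.

Lemma sum_ins n (F : signed_perm n.+1 -> {poly R}) :
  \sum_p F p = \sum_(q : signed_perm n) \sum_(b : bool) \sum_(c < n.+1) F (ins q b c).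
Proof.
rewrite (reindex (@ins3 n)) /=; last by apply: onW_bij; exact: ins3_bij.
rewrite -(pair_big xpredT xpredT (fun qb c => F (ins qb.1 qb.2 c))) /=.
by rewrite -(pair_big xpredT xpredT (fun q b => \sum_(c < n.+1) F (ins q b c))) /=.
Qed.

Lemma w_ins_max n (q : signed_perm n) b :
  w (ins q b ord_max) = if b then 'X * w q else 0.
Proof.
rewrite /w der_ins_max excB_ins_max; case: b => //=.
by case: (derangementB q); rewrite ?mulr0 // add1n exprS.
Qed.

Definition Eq n (q : signed_perm n) i : {poly R} :=
  if is_excB q i then 'X^(excB q) else 'X^((excB q).+1).

Lemma w_ins_lift n (q : signed_perm n) b i :
  w (ins q b (lift ord_max i)) = (if derangementB q then Eq q i else 0)
     + (if onlyb q i then 'X^((excB q).+1) else 0).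
Proof.
rewrite /w der_ins_lift /Eq.
have hex := excB_ins_lift q b i.
case D: (derangementB q).
  have A : [forall k, (k != i) ==> ~~ posfix q k].
    by move: D; rewrite derE => /forallP H; apply/forallP => k; rewrite H implybT.
  have P : posfix q i = false by move: D; rewrite derE => /forallP/(_ i)/negbTE.
  rewrite A /onlyb P /= addr0.
  by case: (is_excB q i) hex => /= hex; congr ('X^_); lia.
case A: [forall k, (k != i) ==> ~~ posfix q k]; last by rewrite /onlyb A andbF add0r.
have P : posfix q i.
  apply/negPn/negP => np; move: D; rewrite derE => /negbT/negP; apply.
  apply/forallP => k; case: (eqVneq k i) => [->//|ne]; exact: (implyP (forallP A k) ne).
rewrite /onlyb P A add0r; rewrite (exc_posfix P) in hex.
by congr ('X^_); lia.
Qed.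

Lemma excB_le n (q : signed_perm n) : (excB q <= n)%N.
Proof.
have : (\sum_(k < n) (is_excB q k : nat) <= \sum_(k < n) 1)%N.
  by apply: leq_sum => k _; apply: leq_b1.
by rewrite sum1_card card_ord excB_sum.
Qed.

Lemma ifE (b : bool) (A B : {poly R}) : (if b then A else B) = A *+ b + B *+ ~~ b.
Proof. by case: b; rewrite /= ?addr0 ?add0r. Qed.

Lemma sumEq n (q : signed_perm n) :
  \sum_(i < n) Eq q i = 'X^(excB q) *+ excB q + 'X^((excB q).+1) *+ (n - excB q).
Proof.
have S : (\sum_(i < n) (~~ is_excB q i : nat) + excB q = n)%N.
  rewrite excB_sum -big_split /= (eq_bigr (fun _ => 1%N)) ?sum1_card ?card_ord //.
  by move=> k _; case: (is_excB q k).
rewrite /Eq.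
under eq_bigr do rewrite ifE.
rewrite big_split /= !sumrMnr -excB_sum; congr (_ + _ *+ _). by apply/eqP; rewrite -(eqn_add2r (excB q)) subnK ?excB_le // S.
Qed.

Lemma sum_w_lift n (q : signed_perm n) b :
  \sum_(i < n) w (ins q b (lift ord_max i)) =
  (if derangementB q then \sum_(i < n) Eq q i else 0)
  + \sum_(i < n) (if onlyb q i then 'X^((excB q).+1) else 0).
Proof.
under eq_bigr do rewrite w_ins_lift.
rewrite big_split /=; congr (_ + _).
by case: (derangementB q); rewrite // big1.
Qed.

Lemma dB_rec n : dB R n.+1 = 'X * dB R n
  + (\sum_(q : signed_perm n) (if derangementB q then \sum_(i < n) Eq q i else 0)) *+ 2
  + ('X * \sum_(i < n) \sum_(q : signed_perm n) (if onlyb q i then 'X^(excB q) else 0)) *+ 2.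
Proof.
rewrite dBw sum_ins.
have step : forall q : signed_perm n, \sum_(b : bool) \sum_(c < n.+1) w (ins q b c) =
   'X * w q + ((if derangementB q then \sum_(i < n) Eq q i else 0)
   + \sum_(i < n) (if onlyb q i then 'X^((excB q).+1) else 0)) *+ 2.
  move=> q; rewrite big_bool /= !(@bigD1_ord _ _ _ n.+1 ord_max xpredT) //=.
  rewrite (sum_w_lift q true) (sum_w_lift q false) (w_ins_max q true) (w_ins_max q false) /=.
  by rewrite add0r mulr2n -addrA.
rewrite (eq_bigr _ (fun q _ => step q)) big_split /= -mulr_sumr -dBw.
rewrite -addrA; congr (_ + _).
rewrite sumrMnl big_split /= mulrnDl; congr (_ + _ *+ 2).
rewrite exchange_big mulr_sumr; apply: eq_bigr => i _; rewrite mulr_sumr.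
by apply: eq_bigr => q _; case: (onlyb q i); rewrite ?mulr0 // exprS.
Qed.

End Poly.

Section Final.
Variable R : realFieldType.

Lemma only_sum m (i : 'I_m.+1) :
  \sum_(q : signed_perm m.+1) (if onlyb q i then 'X^(excB q) else 0) = dB R m.
Proof.
rewrite -big_mkcond (reindex _ (fins_bij i)) /=.
rewrite /dB; apply: eq_big => [r|r _]; first by rewrite -(only_fins i).
by rewrite excB_fins.
Qed.

Lemma dB0 : dB R 0 = 1.
Proof.
rewrite dBw (eq_bigr (fun _ => 1)) ?sumr_const ?card_sp //.
move=> p _; rewrite /w excB_sum big_ord0.
by have -> : derangementB p by rewrite derE; apply/forallP => [[]].
Qed.

Lemma size_dB n : (size (dB R n) <= n.+1)%N.
Proof.
rewrite /dB; apply: (leq_trans (size_sum _ _ _)); apply/bigmax_leqP => p _.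
by rewrite size_polyXn ltnS excB_le.
Qed.

Lemma Hq_eq n e : (e <= n)%N ->
  ('X^e *+ e + 'X^(e.+1) *+ (n - e)) *+ 2 =
  ('X *+ 2) * (n%:R * 'X^e) + ('X *+ 2 * (1 - 'X)) * ('X^e)^`() :> {poly R}.
Proof.
move=> he; rewrite -{2}(subnKC he); move: (n - e)%N => k.
rewrite derivXn.
case: e {he} => [|f] /=; first by rewrite !expr0 mulr0n; ring.
rewrite !exprS; ring.
Qed.

Lemma dB_hd n : dB R n.+1 = ('X *+ 2) * tm (sh (dB R)) n + 'X * dB R n
   + ('X *+ 2 * (1 - 'X)) * (dB R n)^`() + ('X *+ 2) * tm (dB R) n.
Proof.
rewrite dB_rec tm_sh /tm.
have third : \sum_(i < n) \sum_(q : signed_perm n) (if onlyb q i then 'X^(excB q) else 0)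
    = n%:R * dB R n.-1.
  case: n => [|m]; first by rewrite big_ord0 mul0r.
  under eq_bigr do rewrite only_sum.
  by rewrite sumr_const card_ord mulr_natl.
have second : (\sum_(q : signed_perm n) (if derangementB q then \sum_(i < n) Eq R q i else 0)) *+ 2
   = ('X *+ 2) * (n%:R * dB R n) + ('X *+ 2 * (1 - 'X)) * (dB R n)^`().
  rewrite dBw raddf_sum !mulr_sumr -big_split -sumrMnl; apply: eq_bigr => q _.
  rewrite /w; case: (derangementB q); last by rewrite /= raddf0 !mulr0 addr0 mul0rn.
  by rewrite /= sumEq Hq_eq // excB_le.
rewrite third second; ring.
Qed.

Lemma dB_conv n : egf_prod_den (dB R) n = 'X^n - 'X^(n.+1).
Proof.
have h0 : conv (dB R) (egf_den R) 0 = psi 0.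
  by rewrite /conv big_ord1 dB0 /egf_den /psi /= scale1r mul1r scale1r expr1.
exact: (@rec_uniq R _ _ h0 (@conv_rec R _ _ (@dB_hd) (@den_rec R)) (@psi_rec R) n).
Qed.

End Final.

Theorem proposition3p2 (R : realFieldType) :
  (exists fp fm : nat -> {poly R}, forall n, fpm_spec n (fp n) (fm n)) /\
  (forall fp fm : nat -> {poly R}, (forall n, fpm_spec n (fp n) (fm n)) ->
     forall n : nat,
       egf_prod_den fp n = ('X^n - 'X)%R /\
       egf_prod_den fm n = ('X - 'X^(n.+1))%R).
Proof.
split.
  exists (fun n => fplus n (dB R n)), (fun n => dB R n - fplus n (dB R n)) => n.
  have hs : (size (dB R n) <= n.+2)%N by apply: leq_trans (size_dB R n) _.
  split; first by rewrite addrC subrK.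
    by move=> x x0; apply: fplus_pal.
  by move=> x x0; apply: fminus_pal.
move=> fp fm hspec n.
set P := egf_prod_den fp n - ('X^n - 'X).
set M := egf_prod_den fm n - ('X - 'X^(n.+1)).
have hPM : P + M = 0.
  have : egf_prod_den fp n + egf_prod_den fm n = 'X^n - 'X^(n.+1).
    rewrite -dB_conv.
    have e : conv (fun k => fp k + fm k) (egf_den R) n = egf_prod_den (dB R) n.
      by apply: eq_conv => k; case: (hspec k) => <-.
    by rewrite -e convDl.
  rewrite /P /M => e.
  have -> : egf_prod_den fp n - ('X^n - 'X) + (egf_prod_den fm n - ('X - 'X^(n.+1)))
     = (egf_prod_den fp n + egf_prod_den fm n) - ('X^n - 'X^(n.+1)) by ring.
  by rewrite e subrr.
have hP : forall x : R, x != 0 -> x ^+ n.+1 * P.[x^-1] = - P.[x].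
  move=> x x0; rewrite /P !hornerE mulrBr.
  have H : forall k, (fp k).[x^-1] = x^-1 ^+ (k + 0) * (fp k).[x].
    by move=> k; case: (hspec k) => _ h _; rewrite addn0 h ?invr_eq0 // invrK.
  have := @antipal R fp 0 n x x0 H; rewrite addn0 => ->.
  rewrite exprVn.
  have u0 : x ^+ n != 0 by rewrite expf_neq0.
  rewrite exprS; move: (x ^+ n) u0 ((egf_prod_den fp n).[x]) => u u0 a.
  by field; rewrite ?x0 ?u0.
have hM : forall x : R, x != 0 -> x ^+ n.+2 * M.[x^-1] = - M.[x].
  move=> x x0; rewrite /M !hornerE mulrBr.
  have H : forall k, (fm k).[x^-1] = x^-1 ^+ (k + 1) * (fm k).[x].
    by move=> k; case: (hspec k) => _ _ h; rewrite addn1 h ?invr_eq0 // invrK.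
  have := @antipal R fm 1 n x x0 H; rewrite addn1 => ->.
  rewrite exprVn.
  have u0 : x ^+ n != 0 by rewrite expf_neq0.
  rewrite !exprS; move: (x ^+ n) u0 ((egf_prod_den fm n).[x]) => u u0 a.
  by field; rewrite ?x0 ?u0.
have P0 := @P_zero R P M n hPM hP hM.
have M0 : M = 0 by move: hPM; rewrite P0 add0r.
by split; apply/eqP; rewrite -subr_eq0 -/P -/M ?P0 ?M0.
Qed.
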